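(* Let $f:\mathbb{R}\to\mathbb{R}$ be a function whose derivative $f'$ is eventually constant, i.e. there exist $t_-\le t_+$ in $\mathbb{R}$ such that $f'(t)=f'(t_-)$ for all $t\le t_-$ and $f'(t)=f'(t_+)$ for all $t\ge t_+$. Let $g(t)=\max(f(t),0)$. Then $$I(g') \le I(f').$$
   Context: Functions considered are continuous and differentiable except possibly at finitely many points; derivatives are taken where they exist, and $h(\infty)$, $h(-\infty)$ denote the limits of $h(t)$ as $t\to\pm\infty$. For $h:\mathbb{R}\to\mathbb{R}$ the total variation on $[a,b]$ is $V_a^b(h)=\sup_{T}\sum_{t_i\in T}|h(t_i)-h(t_{i-1})|$, the supremum over all partitions $T$ of $[a,b]$, and $V_{-\infty}^{\infty}$ is the corresponding total variation over the whole real line. The intrinsic variability of $h$ is $I(h) = V_{-\infty}^{\infty}(h) + |h(\infty)| + |h(-\infty)|$. *)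

(* Defs.v *)
From Stdlib Require Import Reals Lra List Sorted.
From Coquelicot Require Import Coquelicot.
Open Scope R_scope.

Fixpoint var_sum (h : R -> R) (l : list R) : R :=
  match l with
  | x :: ((y :: _) as l') => Rabs (h y - h x) + var_sum h l'
  | _ => 0
  end.

Definition total_var (h : R -> R) (D : R -> Prop) : Rbar :=
  Lub_Rbar (fun r => exists l : list R,
              Sorted Rlt l /\ List.Forall D l /\ r = var_sum h l).

Definition intrinsic_var (h : R -> R) (D : R -> Prop) : Rbar :=
  Rbar_plus (total_var h D)
    (Rbar_plus (Rbar_abs (Lim h p_infty)) (Rbar_abs (Lim h m_infty))).

Definition I_deriv (f : R -> R) : Rbar :=
  intrinsic_var (Derive f) (fun t => ex_derive f t).

(* Main.v *)
Require Import Defs.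
From Stdlib Require Import Reals List.
From Coquelicot Require Import Coquelicot.
From Stdlib Require Import Lra Sorted Classical.
Import ListNotations.
Open Scope R_scope.

Lemma loc_pos (f : R -> R) t : continuous f t -> f t > 0 -> locally t (fun s => f s > 0).
Proof.
  intros Hc Hp.
  pose (eps := mkposreal (f t) Hp).
  apply (filter_imp (fun s => ball (f t) eps (f s))).
  - intros s Hs. change (Rabs (f s - f t) < f t) in Hs.
    apply Rabs_def2 in Hs. lra.
  - apply Hc. apply locally_ball.
Qed.

Lemma loc_neg (f : R -> R) t : continuous f t -> f t < 0 -> locally t (fun s => f s < 0).
Proof.
  intros Hc Hp.
  assert (Hp' : 0 < - f t) by lra.
  pose (eps := mkposreal (- f t) Hp').
  apply (filter_imp (fun s => ball (f t) eps (f s))).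
  - intros s Hs. change (Rabs (f s - f t) < - f t) in Hs.
    apply Rabs_def2 in Hs. lra.
  - apply Hc. apply locally_ball.
Qed.

Lemma G1 (f : R -> R) t : continuous f t -> f t > 0 ->
  (ex_derive (fun s => Rmax (f s) 0) t <-> ex_derive f t) /\
  Derive (fun s => Rmax (f s) 0) t = Derive f t.
Proof.
  intros Hc Hp.
  assert (L : locally t (fun s => f s = Rmax (f s) 0)).
  { apply (filter_imp (fun s => f s > 0)). intros s Hs. rewrite Rmax_left; lra.
    apply loc_pos; auto. }
  split. split; intro H.
  - apply (ex_derive_ext_loc (fun s => Rmax (f s) 0)); auto.
    apply (filter_imp (fun s => f s = Rmax (f s) 0)); auto.
  - apply (ex_derive_ext_loc f); auto.
  - symmetry. apply Derive_ext_loc. auto.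
Qed.

Lemma G2 (f : R -> R) t : continuous f t -> f t < 0 ->
  ex_derive (fun s => Rmax (f s) 0) t /\
  Derive (fun s => Rmax (f s) 0) t = 0.
Proof.
  intros Hc Hp.
  assert (L : locally t (fun s => 0 = Rmax (f s) 0)).
  { apply (filter_imp (fun s => f s < 0)). intros s Hs. rewrite Rmax_right; lra.
    apply loc_neg; auto. }
  split.
  - apply (ex_derive_ext_loc (fun _ => 0)); auto. apply ex_derive_const.
  - transitivity (Derive (fun _ => 0) t). symmetry. apply Derive_ext_loc. auto. apply Derive_const.
Qed.

Lemma G0loc (f : R -> R) t : locally t (fun s => f s = 0) ->
  ex_derive (fun s => Rmax (f s) 0) t /\
  Derive (fun s => Rmax (f s) 0) t = 0.
Proof.
  intros Hl.
  assert (L : locally t (fun s => 0 = Rmax (f s) 0)).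
  { apply (filter_imp (fun s => f s = 0)). intros s Hs. rewrite Hs, Rmax_right; lra. auto. }
  split.
  - apply (ex_derive_ext_loc (fun _ => 0)); auto. apply ex_derive_const.
  - transitivity (Derive (fun _ => 0) t). symmetry. apply Derive_ext_loc. auto. apply Derive_const.
Qed.

Lemma G3 (f : R -> R) t : f t = 0 -> ex_derive (fun s => Rmax (f s) 0) t ->
  Derive (fun s => Rmax (f s) 0) t = 0.
Proof.
  intros H0 Hd.
  transitivity (derive_pt _ t (ex_derive_Reals_0 _ _ Hd)). symmetry; apply Derive_Reals.
  apply (deriv_minimum _ (t-1) (t+1)); try lra.
  intros x _ _. rewrite H0. rewrite Rmax_right by lra. apply Rmax_r.
Qed.

Lemma mono_aux (h : R -> R) (bad : list R) : (forall t, continuous h t) ->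
  forall x y, x < y ->
  (forall c, x < c < y -> ~ In c bad -> ex_derive h c /\ 0 <= Derive h c) ->
  h x <= h y.
Proof.
  intros Hc. induction bad as [|b bad IH]; intros x y Hxy H.
  - assert (pr1 : forall c, x < c < y -> derivable_pt h c).
    { intros c Hc'. apply ex_derive_Reals_0. apply H; auto. }
    destruct (MVT h id x y pr1 (fun c _ => derivable_pt_id c) Hxy) as [c [P E]].
    + intros c _. apply continuity_pt_filterlim. apply Hc.
    + intros c _. apply derivable_continuous_pt, derivable_pt_id.
    + rewrite derive_pt_id, Derive_Reals in E. unfold id in E.
      destruct (H c P) as [_ Hd]; auto.
      assert (0 <= (y - x) * Derive h c) by (apply Rmult_le_pos; lra). lra.
  - destruct (classic (x < b < y)) as [Hb|Hb].
    + apply Rle_trans with (h b).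
      * apply IH. lra. intros c Hc' Hn. apply H. lra. simpl. intros [E|E]; [lra|auto].
      * apply IH. lra. intros c Hc' Hn. apply H. lra. simpl. intros [E|E]; [lra|auto].
    + apply IH; auto. intros c Hc' Hn. apply H; auto. simpl. intros [E|E]; [subst; tauto|auto].
Qed.

Lemma exists_neg (f : R -> R) bad : (forall t, continuous f t) ->
  (forall t, ~ In t bad -> ex_derive f t) -> forall x y, x < y -> f x > 0 -> f y <= 0 ->
  exists c, x < c < y /\ ex_derive f c /\ Derive f c < 0.
Proof.
  intros Hc Hd x y Hxy Hx Hy. apply NNPP; intro Hn.
  assert (f x <= f y).
  { apply (mono_aux f bad Hc x y Hxy). intros c Hc' Hnb. split. auto.
    apply Rnot_lt_le. intro Hl. apply Hn. exists c. auto. }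
  lra.
Qed.

Lemma exists_pos (f : R -> R) bad : (forall t, continuous f t) ->
  (forall t, ~ In t bad -> ex_derive f t) -> forall x y, x < y -> f x <= 0 -> f y > 0 ->
  exists c, x < c < y /\ ex_derive f c /\ Derive f c > 0.
Proof.
  intros Hc Hd x y Hxy Hx Hy. apply NNPP; intro Hn.
  assert (- f x <= - f y).
  { apply (mono_aux (fun t => - f t) bad) with (x := x) (y := y); auto.
    - intros t. apply continuity_pt_filterlim. apply continuity_pt_opp.
      apply continuity_pt_filterlim. apply Hc.
    - intros c Hc' Hnb. split. exact (ex_derive_opp f c (Hd c Hnb)).
      rewrite Derive_opp.
      apply Rnot_lt_le. intro Hl. apply Hn. exists c. split; auto. split; auto. lra. }
  lra.
Qed.

Lemma affine_right (f : R -> R) tp : (forall t, continuous f t) ->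
  (forall t, tp <= t -> ex_derive f t /\ Derive f t = Derive f tp) ->
  forall t, tp <= t -> f t = f tp + Derive f tp * (t - tp).
Proof.
  intros Hc Hd t Ht.
  destruct (MVT_gen f tp t (fun _ => Derive f tp)) as [c [_ E]].
  - intros x Hx. rewrite Rmin_left, Rmax_right in Hx by lra.
    destruct (Hd x) as [H1 H2]. lra. rewrite <- H2. apply Derive_correct. auto.
  - intros x _. apply continuity_pt_filterlim. apply Hc.
  - lra.
Qed.

Lemma affine_left (f : R -> R) tm : (forall t, continuous f t) ->
  (forall t, t <= tm -> ex_derive f t /\ Derive f t = Derive f tm) ->
  forall t, t <= tm -> f t = f tm + Derive f tm * (t - tm).
Proof.
  intros Hc Hd t Ht.
  destruct (MVT_gen f tm t (fun _ => Derive f tm)) as [c [_ E]].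
  - intros x Hx. rewrite Rmin_right, Rmax_left in Hx by lra.
    destruct (Hd x) as [H1 H2]. lra. rewrite <- H2. apply Derive_correct. auto.
  - intros x _. apply continuity_pt_filterlim. apply Hc.
  - lra.
Qed.

Lemma ev_right (f : R -> R) tp : (forall t, continuous f t) ->
  (forall t, tp <= t -> ex_derive f t /\ Derive f t = Derive f tp) ->
  exists R0 v, forall t, R0 <= t ->
    ex_derive (fun s => Rmax (f s) 0) t /\ Derive (fun s => Rmax (f s) 0) t = v.
Proof.
  intros Hc Hd. pose proof (affine_right f tp Hc Hd) as Ha.
  set (c := Derive f tp) in *.
  destruct (Rtotal_order c 0) as [Hn|[Hz|Hp]].
  - exists (tp + Rabs (f tp) / (- c) + 1), 0. intros t Ht.
    apply G2; auto. rewrite Ha by (pose proof (Rabs_pos (f tp)); assert (0 <= Rabs (f tp) / - c) by (apply Rdiv_le_0_compat; lra); lra).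
    assert (c * (t - tp) <= c * (Rabs (f tp) / (- c) + 1)) by (apply Rmult_le_compat_neg_l; lra).
    assert (c * (Rabs (f tp) / (- c) + 1) = - Rabs (f tp) + c) by (field; lra).
    pose proof (Rle_abs (f tp)). lra.
  - destruct (Rtotal_order (f tp) 0) as [Fn|[Fz|Fp]].
    + exists tp, 0. intros t Ht. apply G2; auto. rewrite Ha by lra. rewrite Hz. lra.
    + exists (tp + 1), 0. intros t Ht. apply G0loc.
      apply (filter_imp (fun s => ball t (mkposreal 1 Rlt_0_1) s)).
      * intros s Hs. change (Rabs (s - t) < 1) in Hs. apply Rabs_def2 in Hs.
        rewrite Ha by lra. rewrite Hz, Fz. ring.
      * apply locally_ball.
    + exists tp, c. intros t Ht. destruct (G1 f t) as [H1 H2]; auto.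
      rewrite Ha by lra. rewrite Hz. lra.
      split. apply H1, Hd; auto. rewrite H2. apply Hd; auto.
  - exists (tp + Rabs (f tp) / c + 1), c. intros t Ht.
    assert (0 <= Rabs (f tp) / c) by (apply Rdiv_le_0_compat; [apply Rabs_pos|lra]).
    destruct (G1 f t) as [H1 H2]; auto.
    rewrite Ha by lra.
    assert (c * (Rabs (f tp) / c + 1) <= c * (t - tp)) by (apply Rmult_le_compat_l; lra).
    assert (c * (Rabs (f tp) / c + 1) = Rabs (f tp) + c) by (field; lra).
    pose proof (Rle_abs (- f tp)). rewrite Rabs_Ropp in *. lra.
    split. apply H1, Hd; lra. rewrite H2. apply Hd; lra.
Qed.

Lemma ev_left (f : R -> R) tm : (forall t, continuous f t) ->
  (forall t, t <= tm -> ex_derive f t /\ Derive f t = Derive f tm) ->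
  exists L0 v, forall t, t <= L0 ->
    ex_derive (fun s => Rmax (f s) 0) t /\ Derive (fun s => Rmax (f s) 0) t = v.
Proof.
  intros Hc Hd. pose proof (affine_left f tm Hc Hd) as Ha.
  set (c := Derive f tm) in *.
  destruct (Rtotal_order c 0) as [Hn|[Hz|Hp]].
  - exists (tm - Rabs (f tm) / (- c) - 1), c. intros t Ht.
    assert (0 <= Rabs (f tm) / - c) by (apply Rdiv_le_0_compat; [apply Rabs_pos|lra]).
    destruct (G1 f t) as [H1 H2]; auto.
    rewrite Ha by lra.
    assert (c * (- (Rabs (f tm) / - c) - 1) <= c * (t - tm)) by (apply Rmult_le_compat_neg_l; lra).
    assert (c * (- (Rabs (f tm) / - c) - 1) = Rabs (f tm) - c) by (field; lra).
    pose proof (Rle_abs (- f tm)). rewrite Rabs_Ropp in *. lra.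
    split. apply H1, Hd; lra. rewrite H2. apply Hd; lra.
  - destruct (Rtotal_order (f tm) 0) as [Fn|[Fz|Fp]].
    + exists tm, 0. intros t Ht. apply G2; auto. rewrite Ha by lra. rewrite Hz. lra.
    + exists (tm - 1), 0. intros t Ht. apply G0loc.
      apply (filter_imp (fun s => ball t (mkposreal 1 Rlt_0_1) s)).
      * intros s Hs. change (Rabs (s - t) < 1) in Hs. apply Rabs_def2 in Hs.
        rewrite Ha by lra. rewrite Hz, Fz. ring.
      * apply locally_ball.
    + exists tm, c. intros t Ht. destruct (G1 f t) as [H1 H2]; auto.
      rewrite Ha by lra. rewrite Hz. lra.
      split. apply H1, Hd; auto. rewrite H2. apply Hd; auto.
  - exists (tm - Rabs (f tm) / c - 1), 0. intros t Ht.
    assert (0 <= Rabs (f tm) / c) by (apply Rdiv_le_0_compat; [apply Rabs_pos|lra]).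
    apply G2; auto. rewrite Ha by lra.
    assert (c * (t - tm) <= c * (- (Rabs (f tm) / c) - 1)) by (apply Rmult_le_compat_l; lra).
    assert (c * (- (Rabs (f tm) / c) - 1) = - Rabs (f tm) - c) by (field; lra).
    pose proof (Rle_abs (f tm)). lra.
Qed.

Lemma Lim_right (h : R -> R) R0 v : (forall t, R0 <= t -> h t = v) -> Lim h p_infty = v.
Proof.
  intros H. apply is_lim_unique. apply (is_lim_ext_loc (fun _ => v)).
  exists R0. intros x Hx. symmetry. apply H. lra. apply is_lim_const.
Qed.

Lemma Lim_left (h : R -> R) L0 v : (forall t, t <= L0 -> h t = v) -> Lim h m_infty = v.
Proof.
  intros H. apply is_lim_unique. apply (is_lim_ext_loc (fun _ => v)).
  exists L0. intros x Hx. symmetry. apply H. lra. apply is_lim_const.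
Qed.

Ltac split5 := split; [|split; [|split; [|split]]].

Definition J (h : R -> R) (l : list R) : R :=
  match l with
  | [] => 0
  | x :: _ => Rabs (h x) + var_sum h l + Rabs (h (last l 0))
  end.

Lemma Jcons h x y t : J h (x :: y :: t) = Rabs (h x) + Rabs (h y - h x) + J h (y :: t) - Rabs (h y).
Proof. unfold J. change (last (x :: y :: t) 0) with (last (y :: t) 0).
  change (var_sum h (x :: y :: t)) with (Rabs (h y - h x) + var_sum h (y :: t)). ring. Qed.

Lemma J1 h x : J h [x] = 2 * Rabs (h x).
Proof. unfold J. simpl. ring. Qed.

Lemma Rabs_junc a b p q : p < 0 -> 0 < q ->
  Rabs a + Rabs b <= Rabs (p - a) + Rabs (q - p) + Rabs (b - q).
Proof. intros. unfold Rabs; repeat destruct Rcase_abs; lra. Qed.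

Lemma lemA (F G f : R -> R) (Df Dg : R -> Prop)
  (HG : forall x, Dg x -> (f x > 0 -> Df x /\ G x = F x) /\ (f x <= 0 -> G x = 0))
  (Hneg : forall x y, x < y -> f x > 0 -> f y <= 0 -> exists c, x < c < y /\ Df c /\ F c < 0)
  (Hpos : forall x y, x < y -> f x <= 0 -> f y > 0 -> exists c, x < c < y /\ Df c /\ F c > 0) :
  forall l x, Sorted Rlt (x :: l) -> List.Forall Dg (x :: l) ->
  exists l2, Sorted Rlt l2 /\ List.Forall Df l2 /\ J G (x :: l) <= J F l2 /\
    (f x > 0 -> exists t, l2 = x :: t) /\
    (f x <= 0 -> l2 = [] \/ exists h t, l2 = h :: t /\ x < h /\ f h > 0).
Proof.
  induction l as [|y l IH]; intros x Hs Hf.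
  - inversion Hf; subst. destruct (HG x H1) as [Hp Hn].
    destruct (Rlt_or_le 0 (f x)) as [Fp|Fn].
    + destruct (Hp Fp) as [Dx Ex]. exists [x]. split5; auto.
      rewrite !J1, Ex. lra. exists []. auto. intros; lra.
    + exists []. split5; auto. rewrite J1, (Hn Fn), Rabs_R0. simpl. lra.
      intros; lra.
  - inversion Hs; subst. inversion Hf; subst.
    assert (Hxy : x < y) by (inversion H2; auto).
    destruct (IH y H1 H4) as [l1 [S1 [F1 [J1' [P1 N1]]]]].
    destruct (HG x H3) as [Hpx Hnx]. inversion H4; subst.
    destruct (HG y H5) as [Hpy Hny].
    rewrite Jcons.
    destruct (Rlt_or_le 0 (f x)) as [Fx|Fx].
    + destruct (Hpx Fx) as [Dx Ex]. rewrite Ex.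
      destruct (Rlt_or_le 0 (f y)) as [Fy|Fy].
      * destruct (P1 Fy) as [t1 E1]. subst l1. destruct (Hpy Fy) as [_ Ey]. rewrite Ey.
        exists (x :: y :: t1). split5.
        -- constructor; auto.
        -- constructor; auto.
        -- rewrite Jcons. lra.
        -- intros _. eauto.
        -- intros; lra.
      * rewrite (Hny Fy), Rabs_R0. destruct (N1 Fy) as [E1|[h [t1 [E1 [Hyh Fh]]]]].
        -- subst l1. exists [x]. split5; auto.
           rewrite J1. change (J F []) with 0 in J1'. rewrite (Rabs_minus_sym 0 (F x)), !Rminus_0_r. lra.
           intros _; exists []; auto. intros; lra.
        -- subst l1. destruct (Hneg x y Hxy Fx Fy) as [p [Pp [Dp Fp]]].
           destruct (Hpos y h Hyh Fy Fh) as [q [Pq [Dq Fq]]].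
           exists (x :: p :: q :: h :: t1). split5.
           ++ constructor. constructor. constructor. auto. constructor; lra.
              constructor; lra. constructor; lra.
           ++ constructor; auto.
           ++ rewrite !Jcons. rewrite (Rabs_minus_sym 0 (F x)), !Rminus_0_r.
              pose proof (Rabs_junc (F x) (F h) (F p) (F q) Fp Fq). lra.
           ++ intros _; eauto.
           ++ intros; lra.
    + rewrite (Hnx Fx), Rabs_R0, Rminus_0_r. exists l1. split5; auto. lra.
      intros; lra.
      intros _. destruct (Rlt_or_le 0 (f y)) as [Fy|Fy].
      * destruct (P1 Fy) as [t1 E1]. right. exists y, t1. auto.
      * destruct (N1 Fy) as [E1|[h [t1 [E1 [Hyh Fh]]]]]. left; auto.
        right. exists h, t1. split; [auto|split; [lra|auto]].
Qed.

Lemma var_snoc h t x R : var_sum h ((x :: t) ++ [R]) = var_sum h (x :: t) + Rabs (h R - h (last (x :: t) 0)).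
Proof.
  revert x. induction t as [|y t IH]; intros x.
  - simpl. ring.
  - change ((x :: y :: t) ++ [R]) with (x :: ((y :: t) ++ [R])).
    change (last (x :: y :: t) 0) with (last (y :: t) 0).
    change (var_sum h (x :: y :: t)) with (Rabs (h y - h x) + var_sum h (y :: t)).
    change (var_sum h (x :: ((y :: t) ++ [R]))) with (Rabs (h y - h x) + var_sum h ((y :: t) ++ [R])).
    rewrite IH. ring.
Qed.

Lemma var_ext h l L R : var_sum h l <= var_sum h (L :: l ++ [R]) /\
  J h l <= Rabs (h L) + var_sum h (L :: l ++ [R]) + Rabs (h R).
Proof.
  destruct l as [|x t].
  - simpl. pose proof (Rabs_pos (h R - h L)). pose proof (Rabs_pos (h L)). pose proof (Rabs_pos (h R)). lra.
  - change (L :: (x :: t) ++ [R]) with (L :: x :: (t ++ [R])).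
    change (var_sum h (L :: x :: (t ++ [R]))) with (Rabs (h x - h L) + var_sum h ((x :: t) ++ [R])).
    rewrite var_snoc. unfold J.
    pose proof (Rabs_pos (h x - h L)). pose proof (Rabs_pos (h R - h (last (x :: t) 0))).
    pose proof (Rabs_triang_inv (h x) (h L)). pose proof (Rabs_triang_inv (h (last (x :: t) 0)) (h R)).
    rewrite (Rabs_minus_sym (h (last (x :: t) 0)) (h R)) in H2. lra.
Qed.

Lemma J_ext h l L R : J h (L :: l ++ [R]) = Rabs (h L) + var_sum h (L :: l ++ [R]) + Rabs (h R).
Proof.
  unfold J. f_equal. f_equal. f_equal.
  change (L :: l ++ [R]) with ((L :: l) ++ [R]). apply last_last.
Qed.

Lemma sorted_snoc l R : Sorted Rlt l -> (forall y, In y l -> y < R) -> Sorted Rlt (l ++ [R]).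
Proof.
  induction l as [|a l IH]; intros Hs Hb.
  - simpl. constructor; constructor.
  - simpl. apply Sorted_inv in Hs. destruct Hs as [Hs Hd]. constructor.
    + apply IH; auto. intros y Hy. apply Hb. simpl; auto.
    + destruct l as [|b l].
      * simpl. constructor. apply Hb. simpl; auto.
      * simpl. constructor. inversion Hd; auto.
Qed.

Lemma bounds l : exists m M, forall y, In y l -> m < y /\ y < M.
Proof.
  induction l as [|a l IH].
  - exists 0, 0. intros y [].
  - destruct IH as [m [M H]]. exists (Rmin m a - 1), (Rmax M a + 1). intros y [E|Hy].
    + rewrite <- E. pose proof (Rmin_r m a). pose proof (Rmax_r M a). lra.
    + destruct (H y Hy). pose proof (Rmin_l m a). pose proof (Rmax_l M a). lra.
Qed.

Lemma extend (D : R -> Prop) l L0 R0 : Sorted Rlt l -> List.Forall D l ->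
  (forall t, t <= L0 -> D t) -> (forall t, R0 <= t -> D t) ->
  exists L R, L <= L0 /\ R0 <= R /\ Sorted Rlt (L :: l ++ [R]) /\ List.Forall D (L :: l ++ [R]).
Proof.
  intros Hs Hf HL HR. destruct (bounds l) as [m [M Hb]].
  exists (Rmin m L0 - 1), (Rmax (Rmax M R0) (Rmin m L0)).
  pose proof (Rmin_l m L0). pose proof (Rmin_r m L0).
  pose proof (Rmax_l (Rmax M R0) (Rmin m L0)). pose proof (Rmax_r (Rmax M R0) (Rmin m L0)).
  pose proof (Rmax_l M R0). pose proof (Rmax_r M R0).
  split; [lra|split; [lra|split]].
  - constructor.
    + apply sorted_snoc; auto. intros y Hy. destruct (Hb y Hy). lra.
    + destruct l as [|a l]; simpl; constructor.
      * lra.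
      * destruct (Hb a). simpl; auto. lra.
  - constructor. apply HL; lra. apply Forall_app. split; auto.
    constructor. apply HR; lra. constructor.
Qed.

Lemma rbar_final (Sg SF : R -> Prop) a b :
  (forall r, Sg r -> exists s, SF s /\ r + a <= s + b) ->
  Rbar_le (Rbar_plus (Lub_Rbar Sg) (Finite a)) (Rbar_plus (Lub_Rbar SF) (Finite b)).
Proof.
  intros H.
  destruct (Lub_Rbar_correct Sg) as [Ug Lg].
  destruct (Lub_Rbar_correct SF) as [Uf Lf].
  destruct (Lub_Rbar SF) as [sf| |] eqn:EF.
  - assert (Hb : Rbar_le (Lub_Rbar Sg) (Finite (sf + b - a))).
    { apply Lg. intros r Hr. destruct (H r Hr) as [s [Hs Hle]].
      specialize (Uf s Hs). simpl in Uf |- *. lra. }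
    destruct (Lub_Rbar Sg) as [sg| |]; simpl in *; try lra; tauto.
  - destruct (Rbar_plus (Lub_Rbar Sg) (Finite a)); simpl; auto.
  - assert (Hb : Rbar_le (Lub_Rbar Sg) m_infty).
    { apply Lg. intros r Hr. destruct (H r Hr) as [s [Hs Hle]].
      specialize (Uf s Hs). simpl in Uf. tauto. }
    destruct (Lub_Rbar Sg); simpl in *; tauto.
Qed.

Theorem lemma2 (f : R -> R)
  (Hcont : forall t, continuous f t)
  (Hdiff : exists bad : list R, forall t, ~ In t bad -> ex_derive f t)
  (Hev : exists tm tp : R, tm <= tp /\
     (forall t, t <= tm -> ex_derive f t /\ Derive f t = Derive f tm) /\
     (forall t, tp <= t -> ex_derive f t /\ Derive f t = Derive f tp)) :
  Rbar_le (I_deriv (fun t => Rmax (f t) 0)) (I_deriv f).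
Proof.
  destruct Hdiff as [bad Hbad]. destruct Hev as [tm [tp [Hle [HL HR]]]].
  destruct (ev_right f tp Hcont HR) as [R0 [vr Hr]].
  destruct (ev_left f tm Hcont HL) as [L0 [vl Hl]].
  unfold I_deriv, intrinsic_var.
  rewrite (Lim_right _ R0 vr (fun t H => proj2 (Hr t H))).
  rewrite (Lim_left _ L0 vl (fun t H => proj2 (Hl t H))).
  rewrite (Lim_right _ tp (Derive f tp) (fun t H => proj2 (HR t H))).
  rewrite (Lim_left _ tm (Derive f tm) (fun t H => proj2 (HL t H))).
  change (Rbar_plus (Rbar_abs (Finite vr)) (Rbar_abs (Finite vl))) with (Finite (Rabs vr + Rabs vl)).
  change (Rbar_plus (Rbar_abs (Finite (Derive f tp))) (Rbar_abs (Finite (Derive f tm))))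
    with (Finite (Rabs (Derive f tp) + Rabs (Derive f tm))).
  unfold total_var. apply rbar_final.
  intros r [l [Hs [Hf Er]]].
  set (g := fun t => Rmax (f t) 0) in *.
  assert (HG : forall x, ex_derive g x -> (f x > 0 -> ex_derive f x /\ Derive g x = Derive f x) /\
                 (f x <= 0 -> Derive g x = 0)).
  { intros x Hx. split.
    - intros Hp. destruct (G1 f x (Hcont x) Hp) as [H1 H2]. split; auto. apply H1; auto.
    - intros Hn. destruct (Rle_lt_or_eq_dec _ _ Hn) as [Hn'|Hz].
      + apply (G2 f x (Hcont x) Hn').
      + apply G3; auto. }
  destruct (extend (ex_derive g) l L0 R0 Hs Hf (fun t H => proj1 (Hl t H)) (fun t H => proj1 (Hr t H)))
    as [L [R [HLL [HRR [Hs2 Hf2]]]]].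
  destruct (lemA (Derive f) (Derive g) f (ex_derive f) (ex_derive g) HG
     (exists_neg f bad Hcont Hbad) (exists_pos f bad Hcont Hbad) (l ++ [R]) L Hs2 Hf2)
    as [l2 [S2 [F2 [J2 _]]]].
  destruct (extend (ex_derive f) l2 tm tp S2 F2 (fun t H => proj1 (HL t H)) (fun t H => proj1 (HR t H)))
    as [L' [R' [HLL' [HRR' [Hs3 Hf3]]]]].
  exists (var_sum (Derive f) (L' :: l2 ++ [R'])). split.
  - exists (L' :: l2 ++ [R']). auto.
  - destruct (var_ext (Derive g) l L R) as [V1 _].
    destruct (var_ext (Derive f) l2 L' R') as [_ V2].
    rewrite J_ext in J2.
    rewrite (proj2 (Hl L HLL)), (proj2 (Hr R HRR)) in J2.
    rewrite (proj2 (HL L' HLL')), (proj2 (HR R' HRR')) in V2.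
    lra.
Qed.
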